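(* Let $\beta=(\beta_n)_{n\ge0}$ be a non-increasing sequence of positive numbers with $\liminf_n\beta_n^{1/n}\ge1$, and let $I_1(z)=\exp\big(-\frac{1+z}{1-z}\big)$. If the composition operator $C_{I_1}$ maps $H^2(\beta)$ into itself, then $\beta$ satisfies the $\Delta_2$-condition.
   Context: $H^2(\beta)$ is the Hilbert space of analytic functions $f(z)=\sum_{n\ge0}a_nz^n$ on the unit disk $\mathbb D$ with $\|f\|^2=\sum_{n\ge0}|a_n|^2\beta_n<\infty$; $C_{I_1}f=f\circ I_1$. $\beta$ satisfies the $\Delta_2$-condition if there is $\delta\in(0,1)$ with $\beta_{2n}\ge\delta\beta_n$ for all $n\ge0$. *)

(* Defs.v *)
From Stdlib Require Import Reals.
From Coquelicot Require Import Coquelicot.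
Open Scope R_scope.

Definition Cexp (w : C) : C :=
  (exp (fst w) * cos (snd w), exp (fst w) * sin (snd w)).

Definition I1 (z : C) : C := Cexp (Copp (Cdiv (Cplus 1 z) (Cminus 1 z))).

(* coefficient sequence a of f(z) = sum a_n z^n lies in H^2(beta) *)
Definition in_H2 (beta : nat -> R) (a : nat -> C) : Prop :=
  ex_series (fun n => (Cmod (a n)) ^ 2 * beta n).

Definition pseries_at (a : nat -> C) (z : C) (v : C) : Prop :=
  @is_series C_AbsRing C_NormedModule (fun n => Cmult (a n) (Cpow z n)) v.

(* C_{I_1} maps H^2(beta) into itself: for every f = sum a_n z^n in H^2(beta),
   the function f o I_1 on the unit disk is given by a power series
   sum b_n z^n (its Taylor series) whose coefficients lie in H^2(beta). *)
Definition CI1_maps_into (beta : nat -> R) : Prop :=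
  forall a : nat -> C, in_H2 beta a ->
    exists b : nat -> C, in_H2 beta b /\
      forall z : C, Cmod z < 1 ->
        exists v : C, pseries_at a (I1 z) v /\ pseries_at b z v.

Definition Delta2 (beta : nat -> R) : Prop :=
  exists delta : R, 0 < delta < 1 /\ forall n : nat, beta (2 * n)%nat >= delta * beta n.

(* Main.v *)
Require Import Defs.
From Stdlib Require Import Reals.
From Coquelicot Require Import Coquelicot.
Open Scope R_scope.
From Stdlib Require Import Lra Lia Psatz Classical ClassicalEpsilon.

Lemma sum_n_m_nonneg (g : nat -> R) a b : (forall k, 0 <= g k) -> 0 <= sum_n_m g a b.
Proof.
  intros Hg. assert (H0 : sum_n_m (G:=R_AbelianMonoid) (fun _ => zero) a b = 0).
  { exact (sum_n_m_const_zero (G:=R_AbelianMonoid) a b). }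
  rewrite <- H0. apply sum_n_m_le. intros k; apply Hg.
Qed.

Lemma sum_n_m_zero_loc (g : nat -> R) a b : (forall k, (a <= k <= b)%nat -> g k = 0) -> sum_n_m g a b = 0.
Proof.
  intros Hg. rewrite (sum_n_m_ext_loc g (fun _ => zero)). exact (sum_n_m_const_zero (G:=R_AbelianMonoid) a b).
  intros k Hk. rewrite Hg; auto.
Qed.

Lemma sum_n_m_sub (g : nat -> R) a b N : (forall k, 0 <= g k) -> (b <= N)%nat -> sum_n_m g a b <= sum_n g N.
Proof.
  intros Hg HbN. unfold sum_n.
  destruct (Compare_dec.le_lt_dec a b) as [Hab|Hab].
  - destruct a as [|a'].
    + rewrite (sum_n_m_Chasles g 0 b N) by lia. unfold plus; simpl.
      pose proof (sum_n_m_nonneg g (S b) N Hg). lra.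
    + rewrite (sum_n_m_Chasles g 0 a' N) by lia.
      rewrite (sum_n_m_Chasles g (S a') b N) by lia. unfold plus; simpl.
      pose proof (sum_n_m_nonneg g (S b) N Hg). pose proof (sum_n_m_nonneg g 0 a' Hg). lra.
  - rewrite sum_n_m_zero by lia. apply sum_n_m_nonneg; auto.
Qed.

Lemma sum_n_ind_le (g : nat -> R) a b M : (forall k, 0 <= g k) ->
  sum_n (fun k => if andb (Nat.leb a k) (Nat.leb k b) then g k else 0) M <= sum_n_m g a b.
Proof.
  intros Hg. set (h := fun k => if andb (Nat.leb a k) (Nat.leb k b) then g k else 0).
  assert (Hh : forall k, 0 <= h k).
  { intros k; unfold h. destruct (andb _ _); auto; lra. }
  destruct (Compare_dec.le_lt_dec a b) as [Hab|Hab].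
  2:{ rewrite (sum_n_m_zero g) by lia. unfold sum_n. rewrite sum_n_m_zero_loc. apply Rle_refl.
      intros k Hk. unfold h. destruct (Nat.leb_spec a k); destruct (Nat.leb_spec k b); simpl; auto; lia. }
  apply Rle_trans with (sum_n h (Nat.max M b)).
  { unfold sum_n at 1. apply sum_n_m_sub; auto; lia. }
  unfold sum_n.
  assert (E : sum_n_m h a b = sum_n_m g a b).
  { apply sum_n_m_ext_loc. intros k Hk. unfold h.
    destruct (Nat.leb_spec a k); destruct (Nat.leb_spec k b); simpl; auto; lia. }
  assert (Z2 : sum_n_m h (S b) (Nat.max M b) = 0).
  { apply sum_n_m_zero_loc. intros k Hk. unfold h.
    destruct (Nat.leb_spec a k); destruct (Nat.leb_spec k b); simpl; auto; lia. }
  destruct a as [|a'].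
  - rewrite (sum_n_m_Chasles h 0 b (Nat.max M b)) by lia. unfold plus; simpl. lra.
  - rewrite (sum_n_m_Chasles h 0 a' (Nat.max M b)) by lia.
    rewrite (sum_n_m_Chasles h (S a') b (Nat.max M b)) by lia. unfold plus; simpl.
    assert (Z1 : sum_n_m h 0 a' = 0).
    { apply sum_n_m_zero_loc. intros k Hk. unfold h.
      destruct (Nat.leb_spec (S a') k); simpl; auto; lia. }
    lra.
Qed.

Lemma sum_n_single (e : nat -> R) j N : (j <= N)%nat -> (forall i, (i <= N)%nat -> i <> j -> e i = 0) -> sum_n e N = e j.
Proof.
  induction N as [|N IH]; intros HjN He.
  - rewrite sum_O. assert (j = 0%nat) by lia. subst; auto.
  - rewrite sum_Sn. unfold plus; simpl.
    destruct (Nat.eq_dec j (S N)) as [->|Hne].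
    + assert (sum_n e N = 0).
      { unfold sum_n. apply sum_n_m_zero_loc. intros k Hk. apply He; lia. }
      lra.
    + rewrite IH by (try lia; intros; apply He; lia). rewrite (He (S N)); auto; lra.
Qed.

Lemma sum_n_zero (e : nat -> R) N : (forall i, (i <= N)%nat -> e i = 0) -> sum_n e N = 0.
Proof. intros He. unfold sum_n. apply sum_n_m_zero_loc. intros k Hk; apply He; lia. Qed.

Lemma partial_le_Series (a : nat -> R) N : (forall k, 0 <= a k) -> ex_series a -> sum_n a N <= Series a.
Proof.
  intros Ha Hex.
  assert (Hl : is_lim_seq (sum_n a) (Series a)) by exact (Series_correct a Hex).
  apply (is_lim_seq_le_loc (fun _ => sum_n a N) (sum_n a) (sum_n a N) (Series a)); auto.
  - exists N. intros n Hn. unfold sum_n at 1. apply sum_n_m_sub; auto.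
  - apply is_lim_seq_const.
Qed.

Lemma ex_series_bounded (a : nat -> R) M : (forall k, 0 <= a k) -> (forall N, sum_n a N <= M) -> ex_series a.
Proof.
  intros Ha HM. destruct (ex_finite_lim_seq_incr (sum_n a) M) as [l Hl]; auto.
  intros n. rewrite sum_Sn. unfold plus; simpl. specialize (Ha (S n)). lra.
  exists l. exact Hl.
Qed.

Lemma fst_sum_n (u : nat -> C) N : fst (sum_n (G:=C_AbelianMonoid) u N) = sum_n (fun k => fst (u k)) N.
Proof.
  induction N as [|N IH].
  - rewrite !sum_O. reflexivity.
  - rewrite !sum_Sn. simpl. rewrite <- IH. reflexivity.
Qed.

Lemma BR1 (u : nat -> C) v M : is_series (K:=C_AbsRing) (V:=C_NormedModule) u v ->
  (forall N, sum_n (fun k => Cmod (u k)) N <= M) -> Cmod v <= M.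
Proof.
  intros Hs HM.
  assert (Hl : is_lim_seq (fun N => Cmod (sum_n (G:=C_AbelianMonoid) u N)) (Cmod v)).
  { exact (filterlim_comp _ _ _ (sum_n u) norm eventually (locally v) (locally (norm v)) Hs (filterlim_norm v)). }
  apply (is_lim_seq_le (fun N => Cmod (sum_n (G:=C_AbelianMonoid) u N)) (fun _ => M) (Cmod v) M); auto.
  - intros N. eapply Rle_trans; [|apply (HM N)]. unfold sum_n.
    exact (norm_sum_n_m (K:=C_AbsRing) (V:=C_NormedModule) u 0 N).
  - apply is_lim_seq_const.
Qed.

Lemma BR2 (u : nat -> C) v L N0 : is_series (K:=C_AbsRing) (V:=C_NormedModule) u v ->
  (forall N, (N0 <= N)%nat -> L <= sum_n (fun k => fst (u k)) N) -> L <= Cmod v.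
Proof.
  intros Hs HL.
  assert (Hl : is_lim_seq (fun N => Cmod (sum_n (G:=C_AbelianMonoid) u N)) (Cmod v)).
  { exact (filterlim_comp _ _ _ (sum_n u) norm eventually (locally v) (locally (norm v)) Hs (filterlim_norm v)). }
  apply (is_lim_seq_le_loc (fun _ => L) (fun N => Cmod (sum_n (G:=C_AbelianMonoid) u N)) L (Cmod v)); auto.
  - exists N0. intros N HN. eapply Rle_trans; [apply (HL N HN)|].
    rewrite <- fst_sum_n. eapply Rle_trans; [apply Rle_abs|]. apply re_le_Cmod.
  - apply is_lim_seq_const.
Qed.

Lemma Cpow_real (y : R) k : Cpow (RtoC y) k = RtoC (y ^ k).
Proof.
  induction k as [|k IH]; simpl. reflexivity.
  rewrite IH. unfold Cmult, RtoC; simpl. f_equal; ring.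
Qed.

Lemma beta_anti (beta : nat -> R) : (forall n, beta (S n) <= beta n) ->
  forall m n, (m <= n)%nat -> beta n <= beta m.
Proof.
  intros Hd m n Hmn. induction Hmn. lra. specialize (Hd m0). lra.
Qed.



Lemma pow_le1 (y : R) k : 0 <= y <= 1 -> y ^ k <= 1.
Proof.
  intros Hy. induction k; simpl. lra.
  assert (0 <= y ^ k) by (apply pow_le; lra). nra.
Qed.

Lemma pow_le_dec (y : R) m k : 0 <= y <= 1 -> (m <= k)%nat -> y ^ k <= y ^ m.
Proof.
  intros Hy Hmk. replace k with (m + (k - m))%nat by lia. rewrite pow_add.
  assert (0 <= y ^ m) by (apply pow_le; lra).
  assert (y ^ (k - m) <= 1) by (apply pow_le1; lra).
  nra.
Qed.

Lemma sum_n_m_le_loc (f g : nat -> R) a b : (forall k, (a <= k <= b)%nat -> f k <= g k) ->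
  sum_n_m f a b <= sum_n_m g a b.
Proof.
  intros H.
  set (f' := fun k => if andb (Nat.leb a k) (Nat.leb k b) then f k else g k).
  rewrite (sum_n_m_ext_loc f f').
  - apply sum_n_m_le. intros k. unfold f'.
    destruct (Nat.leb_spec a k); destruct (Nat.leb_spec k b); simpl; try lra; apply H; lia.
  - intros k Hk. unfold f'. destruct (Nat.leb_spec a k); destruct (Nat.leb_spec k b); simpl; auto; lia.
Qed.

Lemma liminf_series (beta : nat -> R) : (forall n, 0 < beta n) ->
  Rbar_le (Finite 1) (LimInf_seq (fun n => Rpower (beta n) (/ INR n))) ->
  forall x, 0 <= x < 1 -> ex_series (fun k => x ^ k * / beta k).
Proof.
  intros Hpos Hli x Hx.
  set (rho := (1 + x) / 2).
  assert (Hrho : 0 < rho < 1) by (unfold rho; lra).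
  assert (HN : exists N, forall k, (N <= k)%nat -> rho < Rpower (beta k) (/ INR k)).
  { destruct (ex_LimInf_seq (fun n => Rpower (beta n) (/ INR n))) as [l Hl].
    rewrite (is_LimInf_seq_unique _ l Hl) in Hli.
    destruct l as [l0| |]; simpl in Hli, Hl.
    - assert (He : 0 < 1 - rho) by lra.
      destruct (Hl (mkposreal _ He)) as [_ [N HN]]. exists N. intros k Hk.
      specialize (HN k Hk). simpl in HN. lra.
    - destruct (Hl rho) as [N HN]. exists N; auto.
    - contradiction. }
  destruct HN as [N HN].
  set (K := S N).
  apply (proj2 (ex_series_incr_n _ K)).
  apply (ex_series_le (K:=R_AbsRing) (V:=R_CompleteNormedModule) _ (fun k => (x / rho) ^ (K + k))).
  - intros k. change (norm (x ^ (K + k) * / beta (K + k)%nat)) with (Rabs (x ^ (K + k) * / beta (K + k)%nat)).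
    assert (Hb := Hpos (K + k)%nat).
    assert (Hlt : rho ^ (K + k) < beta (K + k)%nat).
    { specialize (HN (K + k)%nat ltac:(unfold K; lia)).
      assert (HKk : 0 < INR (K + k)) by (apply lt_0_INR; unfold K; lia).
      rewrite <- (Rpower_pow (K + k) rho) by lra.
      replace (beta (K + k)%nat) with (Rpower (Rpower (beta (K + k)%nat) (/ INR (K + k))) (INR (K + k))).
      apply Rlt_Rpower_l; auto. split; auto. lra.
      rewrite Rpower_mult. rewrite Rinv_l by lra. apply Rpower_1; auto. }
    assert (Hr0 : 0 < rho ^ (K + k)) by (apply pow_lt; lra).
    assert (Hx0 : 0 <= x ^ (K + k)) by (apply pow_le; lra).
    rewrite Rabs_pos_eq.
    2:{ apply Rmult_le_pos; auto. left; apply Rinv_0_lt_compat; auto. }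
    replace ((x / rho) ^ (K + k)) with (x ^ (K + k) * / rho ^ (K + k)).
    2:{ unfold Rdiv. rewrite Rpow_mult_distr. rewrite pow_inv. reflexivity. }
    apply Rmult_le_compat_l; auto. left. apply Rinv_lt_contravar; auto. nra.
  - apply (ex_series_incr_n (fun k => (x / rho) ^ k) K).
    apply ex_series_geom. rewrite Rabs_pos_eq.
    apply Rmult_lt_reg_r with rho. lra. unfold Rdiv. rewrite Rmult_assoc, Rinv_l by lra. unfold rho; lra.
    unfold Rdiv. apply Rmult_le_pos. lra. left; apply Rinv_0_lt_compat; lra.
Qed.

Lemma not_delta2 (beta : nat -> R) : (forall n, 0 < beta n) -> (forall n, beta (S n) <= beta n) ->
  ~ Delta2 beta -> forall eps, 0 < eps -> forall M, exists n, (M <= n)%nat /\ beta (2 * n)%nat <= eps * beta n.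
Proof.
  intros Hpos Hd HD eps Heps M. apply NNPP. intros Hno. apply HD.
  assert (Hall : forall n, (M <= n)%nat -> eps * beta n < beta (2 * n)%nat).
  { intros n Hn. apply Rnot_le_lt. intros Hle. apply Hno. exists n; auto. }
  set (d := Rmin (Rmin eps (beta (2 * M)%nat / beta 0%nat)) (1/2)).
  assert (H0 : 0 < beta (2 * M)%nat / beta 0%nat) by (apply Rdiv_lt_0_compat; auto).
  assert (Hd1 : d <= eps) by (unfold d; eapply Rle_trans; [apply Rmin_l|apply Rmin_l]).
  assert (Hd2 : d <= beta (2 * M)%nat / beta 0%nat) by (unfold d; eapply Rle_trans; [apply Rmin_l|apply Rmin_r]).
  assert (Hd3 : d <= 1/2) by (unfold d; apply Rmin_r).
  assert (Hd0 : 0 < d) by (unfold d; repeat apply Rmin_pos; lra).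
  exists d. split. lra.
  intros n. destruct (Compare_dec.le_lt_dec M n) as [Hn|Hn].
  - specialize (Hall n Hn). specialize (Hpos n). apply Rle_ge. nra.
  - assert (Hb1 : beta (2 * M)%nat <= beta (2 * n)%nat) by (apply beta_anti; auto; lia).
    assert (Hb2 : beta n <= beta 0%nat) by (apply beta_anti; auto; lia).
    assert (Hp0 := Hpos 0%nat). assert (Hpn := Hpos n).
    assert (d * beta 0%nat <= beta (2 * M)%nat).
    { apply Rmult_le_compat_r with (r := beta 0%nat) in Hd2; [|lra].
      unfold Rdiv in Hd2. rewrite Rmult_assoc, Rinv_l in Hd2 by lra. lra. }
    apply Rle_ge. nra.
Qed.

Lemma exp_le_mono a b : a <= b -> exp a <= exp b.
Proof. intros [H|H]. left; apply exp_increasing; auto. subst; lra. Qed.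

Lemma exp_pow_lem a n : exp a ^ n = exp (INR n * a).
Proof.
  induction n as [|n IH]. simpl. rewrite Rmult_0_l, exp_0. reflexivity.
  simpl pow. rewrite IH, <- exp_plus. f_equal. rewrite S_INR. ring.
Qed.

Lemma r_bound t : 0 < t <= 1/3 -> 0 < (1 - t) / (1 + t) /\ ((1 - t) / (1 + t)) ^ 2 <= exp (- t) ^ 3.
Proof.
  intros Ht. split. apply Rdiv_lt_0_compat; lra.
  assert (E : (1 - t) / (1 + t) = 1 + (- (2 * t / (1 + t)))) by (field; lra).
  assert (H1 := exp_ineq1_le (- (2 * t / (1 + t)))).
  assert (H2 : exp (- (2 * t / (1 + t))) <= exp (- (3/2) * t)).
  { apply exp_le_mono. apply Ropp_le_cancel. rewrite Ropp_involutive.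
    apply Rmult_le_reg_r with (1 + t). lra. unfold Rdiv. rewrite Rmult_assoc, Rinv_l by lra. nra. }
  assert (H3 : exp (- (3/2) * t) ^ 2 = exp (- t) ^ 3).
  { rewrite !exp_pow_lem. f_equal. simpl. field. }
  assert (Hr : 0 < (1 - t) / (1 + t)) by (apply Rdiv_lt_0_compat; lra).
  rewrite <- H3. apply pow_incr. lra.
Qed.

Lemma block_est (beta : nat -> R) (Hpos : forall n, 0 < beta n) (Hd : forall n, beta (S n) <= beta n)
  (Hser : forall x, 0 <= x < 1 -> ex_series (fun k => x ^ k * / beta k))
  n p eps t M0 :
  (1 <= n)%nat -> 0 < p < 1 -> 0 < eps -> beta (2 * n)%nat <= eps * beta n ->
  0 < t <= 1/3 -> exp (- t) ^ n = p ->
  exists U, (M0 <= U)%nat /\ (3 * n <= U)%nat /\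
    0 < sum_n_m (fun k => (exp (- t) ^ 2) ^ k * / beta k) n U /\
    Series (fun k => (((1 - t) / (1 + t)) ^ 2) ^ k * / beta k)
      <= (eps / p ^ 6 + 2 * p) * sum_n_m (fun k => (exp (- t) ^ 2) ^ k * / beta k) n U.
Proof.
  intros Hn Hp Heps Hbad Ht Hyn.
  set (y := exp (- t)). fold y in Hyn.
  assert (Hy : 0 < y < 1).
  { split. apply exp_pos. unfold y. rewrite <- exp_0. apply exp_increasing. lra. }
  set (r := (1 - t) / (1 + t)).
  destruct (r_bound t Ht) as [Hr0 Hr2]. fold r y in Hr0, Hr2.
  set (w := fun k => / beta k).
  assert (Hw : forall k, 0 < w k) by (intros; unfold w; apply Rinv_0_lt_compat; auto).
  assert (Hwm : forall m k, (m <= k)%nat -> w m <= w k).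
  { intros m k Hmk. unfold w. apply Rinv_le_contravar; auto. apply beta_anti; auto. }
  set (g := fun k => (y ^ 2) ^ k * w k).
  set (A := fun k => (y ^ 3) ^ k * w k).
  assert (Hy2 : 0 < y ^ 2 < 1) by (split; simpl; nra).
  assert (Hy3 : 0 < y ^ 3 < 1) by (split; simpl; nra).
  assert (Hg : forall k, 0 <= g k) by (intros; unfold g; apply Rmult_le_pos; [apply pow_le; lra| left; auto]).
  assert (HA : forall k, 0 <= A k) by (intros; unfold A; apply Rmult_le_pos; [apply pow_le; lra| left; auto]).
  assert (HexA : ex_series A) by (apply Hser; lra).
  assert (HS : Series (fun k => (r ^ 2) ^ k * / beta k) <= Series A).
  { apply Series_le; auto. intros k. fold (w k). split.
    apply Rmult_le_pos; [apply pow_le; nra| left; auto].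
    unfold A. apply Rmult_le_compat_r; [left; auto|]. apply pow_incr. split; [nra|auto]. }
  set (eta := p * g n).
  assert (Heta : 0 < eta).
  { unfold eta, g. apply Rmult_lt_0_compat; [lra|]. apply Rmult_lt_0_compat; auto. apply pow_lt; lra. }
  assert (Hl : is_lim_seq (sum_n A) (Series A)) by exact (Series_correct A HexA).
  apply is_lim_seq_spec in Hl. destruct (Hl (mkposreal eta Heta)) as [N1 HN1].
  set (U := Nat.max (Nat.max M0 (3 * n)) N1).
  exists U. split; [unfold U; lia|]. split; [unfold U; lia|].
  assert (HUN : Series A < sum_n A U + eta).
  { specialize (HN1 U ltac:(unfold U; lia)). simpl in HN1.
    apply Rabs_def2 in HN1. lra. }
  set (T := sum_n_m g n U).
  assert (HTn : g n <= T).
  { unfold T. rewrite (sum_n_m_Chasles g n n U) by lia. rewrite sum_n_n. unfold plus; simpl.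
    pose proof (sum_n_m_nonneg g (S n) U Hg). lra. }
  assert (HT0 : 0 < T).
  { eapply Rlt_le_trans; [|apply HTn]. unfold g. apply Rmult_lt_0_compat; auto. apply pow_lt; lra. }
  split. exact HT0.
  destruct n as [|n']; [lia|].
  assert (Hsplit : sum_n A U = sum_n_m A 0 n' + sum_n_m A (S n') U).
  { unfold sum_n. rewrite (sum_n_m_Chasles A 0 n' U) by (unfold U; lia). reflexivity. }
  set (n := S n') in *.
  assert (HP1 : sum_n_m A 0 n' <= INR n * w n).
  { apply Rle_trans with (sum_n_m (fun _ => w n) 0 n').
    - apply sum_n_m_le_loc. intros k Hk. unfold A.
      assert (0 <= (y ^ 3) ^ k <= 1) by (split; [apply pow_le; lra| apply pow_le1; lra]).
      assert (w k <= w n) by (apply Hwm; unfold n; lia).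
      assert (0 < w k) by auto. nra.
    - rewrite sum_n_m_const. unfold n. replace (S n' - 0)%nat with (S n') by lia. lra. }
  assert (HP2 : sum_n_m A n U <= p * T).
  { unfold T. rewrite <- (sum_n_m_mult_l (K:=R_Ring)).
    apply sum_n_m_le_loc. intros k Hk. unfold A, g. change (mult p ((y ^ 2) ^ k * w k)) with (p * ((y ^ 2) ^ k * w k)).
    rewrite <- !pow_mult. replace (3 * k)%nat with (k + 2 * k)%nat by lia. rewrite pow_add.
    assert (y ^ k <= p). { rewrite <- Hyn. apply pow_le_dec. lra. unfold n in *; lia. }
    assert (0 <= y ^ (2 * k)) by (apply pow_le; lra).
    assert (0 < w k) by auto. assert (0 <= y ^ (2 * k) * w k) by (apply Rmult_le_pos; lra). nra. }
  assert (HT3 : INR n * (p ^ 6 * w (2 * n)%nat) <= T).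
  { apply Rle_trans with (sum_n_m g (2 * n) (3 * n - 1)).
    - apply Rle_trans with (sum_n_m (fun _ => p ^ 6 * w (2 * n)%nat) (2 * n) (3 * n - 1)).
      + rewrite sum_n_m_const. replace (S (3 * n - 1) - 2 * n)%nat with n by (unfold n; lia). lra.
      + apply sum_n_m_le_loc. intros k Hk. unfold g.
        assert (p ^ 6 <= (y ^ 2) ^ k).
        { rewrite <- Hyn. rewrite <- !pow_mult. apply pow_le_dec. lra. unfold n in *; lia. }
        assert (w (2 * n)%nat <= w k) by (apply Hwm; lia).
        assert (0 <= p ^ 6) by (apply pow_le; lra). assert (0 < w (2 * n)%nat) by auto. nra.
    - unfold T. rewrite (sum_n_m_Chasles g n (2 * n - 1) U) by (unfold U, n in *; lia).
      rewrite (sum_n_m_Chasles g (S (2 * n - 1)) (3 * n - 1) U) by (unfold U, n in *; lia).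
      replace (S (2 * n - 1)) with (2 * n)%nat by (unfold n; lia).
      pose proof (sum_n_m_nonneg g n (2 * n - 1) Hg). pose proof (sum_n_m_nonneg g (S (3 * n - 1)) U Hg).
      unfold plus; simpl in *. lra. }
  assert (Hwn : w n <= eps * w (2 * n)%nat).
  { unfold w. assert (Hb1 := Hpos n). assert (Hb2 := Hpos (2 * n)%nat).
    apply Rmult_le_reg_r with (beta n * beta (2 * n)%nat). nra.
    field_simplify; try lra. }
  assert (Hp6 : 0 < p ^ 6) by (apply pow_lt; lra).
  assert (HP1' : INR n * w n <= eps / p ^ 6 * T).
  { apply Rle_trans with (eps / p ^ 6 * (INR n * (p ^ 6 * w (2 * n)%nat))).
    - replace (eps / p ^ 6 * (INR n * (p ^ 6 * w (2 * n)%nat))) with (INR n * (eps * w (2 * n)%nat)) by (field; lra).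
      apply Rmult_le_compat_l; auto. apply pos_INR.
    - apply Rmult_le_compat_l; auto. unfold Rdiv. apply Rmult_le_pos; [lra| left; apply Rinv_0_lt_compat; auto]. }
  assert (Heta' : eta <= p * T) by (unfold eta; apply Rmult_le_compat_l; lra).
  change (Series (fun k => (r ^ 2) ^ k * / beta k) <= (eps / p ^ 6 + 2 * p) * T).
  lra.
Qed.

Lemma I1_real t : 0 < t < 1 -> I1 (RtoC (- ((1 - t) / (1 + t)))) = RtoC (exp (- t)).
Proof.
  intros Ht. unfold I1, Cexp.
  set (w := Copp (Cdiv (Cplus 1 (RtoC (- ((1 - t) / (1 + t))))) (Cminus 1 (RtoC (- ((1 - t) / (1 + t))))))).
  assert (E1 : fst w = - t).
  { unfold w. simpl. field. lra. }
  assert (E2 : snd w = 0).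
  { unfold w. simpl. field. lra. }
  rewrite E1, E2, cos_0, sin_0. unfold RtoC. f_equal; ring.
Qed.

Definition pj (j : nat) : R := (/ 4) ^ (S j).
Definition epsj (j : nat) : R := pj j ^ 6 * (/ 4) ^ j / 2.
Definition tt (j n : nat) : R := - ln (pj j) / INR n.
Definition yy (j n : nat) : R := exp (- tt j n).
Definition TT (beta : nat -> R) (j n U : nat) : R := sum_n_m (fun k => (yy j n ^ 2) ^ k * / beta k) n U.
Definition BlockSpec (beta : nat -> R) (j n U : nat) : Prop :=
  (1 <= n)%nat /\ (n <= U)%nat /\ 0 < tt j n <= 1/3 /\ 0 < TT beta j n U /\
  Series (fun k => (((1 - tt j n) / (1 + tt j n)) ^ 2) ^ k * / beta k) <= (/ 4) ^ j * TT beta j n U.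

Lemma pj_bounds j : 0 < pj j < 1.
Proof.
  unfold pj. split. apply pow_lt; lra.
  simpl. assert ((/4) ^ j <= 1) by (apply pow_le1; lra). assert (0 < (/4)^j) by (apply pow_lt; lra). nra.
Qed.

Lemma block_exists (beta : nat -> R) (Hpos : forall n, 0 < beta n) (Hd : forall n, beta (S n) <= beta n)
  (Hli : Rbar_le (Finite 1) (LimInf_seq (fun n => Rpower (beta n) (/ INR n))))
  (HnD : ~ Delta2 beta) j M :
  exists nU : nat * nat, (M <= fst nU)%nat /\ BlockSpec beta j (fst nU) (snd nU).
Proof.
  pose proof (pj_bounds j) as Hp. set (p := pj j) in *.
  assert (Hlnp : ln p < 0) by (rewrite <- ln_1; apply ln_increasing; lra).
  destruct (INR_archimed 1 (-3 * ln p)) as [K HK]; [lra|].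
  assert (Heps : 0 < epsj j).
  { unfold epsj. fold p. assert (0 < p ^ 6) by (apply pow_lt; lra). assert (0 < (/4)^j) by (apply pow_lt; lra).
    apply Rdiv_lt_0_compat; [nra|lra]. }
  destruct (not_delta2 beta Hpos Hd HnD (epsj j) Heps (Nat.max M (Nat.max K 1))) as [n [Hn Hbad]].
  assert (HnR : INR K <= INR n) by (apply le_INR; lia).
  assert (Hn1 : 1 <= INR n) by (change 1 with (INR 1); apply le_INR; lia).
  assert (Ht : 0 < tt j n <= 1/3).
  { unfold tt. fold p. split.
    - apply Rdiv_lt_0_compat; lra.
    - apply Rmult_le_reg_r with (INR n). lra. unfold Rdiv. rewrite Rmult_assoc, Rinv_l by lra. lra. }
  assert (Hyn : exp (- tt j n) ^ n = p).
  { rewrite exp_pow_lem. unfold tt. fold p. replace (INR n * - (- ln p / INR n)) with (ln p) by (field; lra).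
    apply exp_ln; lra. }
  destruct (block_est beta Hpos Hd (liminf_series beta Hpos Hli) n p (epsj j) (tt j n) n
    ltac:(lia) Hp Heps Hbad Ht Hyn) as [U [HU1 [HU2 [HT HS]]]].
  exists (n, U). simpl. split. lia.
  unfold BlockSpec, TT, yy. split. lia. split. lia. split. exact Ht. split. exact HT.
  replace ((/ 4) ^ j) with (epsj j / p ^ 6 + 2 * p). exact HS.
  unfold epsj, p, pj. simpl. field. apply pow_nonzero. lra.
Qed.

Lemma geom_half N : sum_n (fun j => (/ 2) ^ j) N + (/ 2) ^ N <= 2.
Proof.
  induction N as [|N IH]. rewrite sum_O. simpl. lra.
  rewrite sum_Sn. unfold plus; simpl in *. lra.
Qed.

Lemma amgm X R0 be la : 0 < be -> 0 < la -> X * R0 <= (X ^ 2 * be * / la + la * R0 ^ 2 * / be) * / 2.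
Proof.
  intros Hb Hl.
  assert (E : (X ^ 2 * be * / la + la * R0 ^ 2 * / be) * / 2 - X * R0 = (X * be - la * R0) ^ 2 * / (2 * la * be)).
  { field. lra. }
  assert (0 <= (X * be - la * R0) ^ 2 * / (2 * la * be)).
  { apply Rmult_le_pos. apply pow2_ge_0. left. apply Rinv_0_lt_compat. nra. }
  lra.
Qed.

Section Main.
Variable beta : nat -> R.
Hypothesis Hpos : forall n, 0 < beta n.
Hypothesis Hd : forall n, beta (S n) <= beta n.
Hypothesis Hli : Rbar_le (Finite 1) (LimInf_seq (fun n => Rpower (beta n) (/ INR n))).
Hypothesis HCI : CI1_maps_into beta.
Variable G : nat -> nat -> nat * nat.
Hypothesis HG : forall j M, (M <= fst (G j M))%nat /\ BlockSpec beta j (fst (G j M)) (snd (G j M)).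

Definition bl (j : nat) : nat * nat :=
  nat_rect (fun _ => (nat * nat)%type) (G 0%nat 0%nat) (fun j' prev => G (S j') (S (snd prev))) j.
Definition nb j := fst (bl j).
Definition ub j := snd (bl j).

Lemma Hspec j : BlockSpec beta j (nb j) (ub j).
Proof. destruct j; unfold nb, ub; simpl; apply HG. Qed.

Lemma Hnext j : (ub j < nb (S j))%nat.
Proof. unfold nb, ub. simpl. destruct (HG (S j) (S (snd (bl j)))) as [H _]. unfold bl in *. lia. Qed.

Lemma Hnu j : (nb j <= ub j)%nat.
Proof. destruct (Hspec j) as [_ [H _]]. exact H. Qed.

Lemma Hjn j : (j <= nb j)%nat.
Proof. induction j. lia. pose proof (Hnext j). pose proof (Hnu j). lia. Qed.

Lemma Hsep i j : (i < j)%nat -> (ub i < nb j)%nat.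
Proof.
  induction j; intros Hij. lia.
  pose proof (Hnext j). destruct (Nat.eq_dec i j) as [->|Hne]. lia.
  pose proof (IHj ltac:(lia)). pose proof (Hnu j). lia.
Qed.

Lemma Hdisj i j k : (nb i <= k <= ub i)%nat -> (nb j <= k <= ub j)%nat -> i = j.
Proof.
  intros Hi Hj. destruct (Nat.lt_total i j) as [H|[H|H]]; auto.
  - pose proof (Hsep i j H). lia.
  - pose proof (Hsep j i H). lia.
Qed.

Definition Tj j := TT beta j (nb j) (ub j).
Definition yj j := yy j (nb j).
Definition cj j := sqrt ((/ 2) ^ j / Tj j).

Lemma HT j : 0 < Tj j.
Proof. destruct (Hspec j) as [_ [_ [_ [H _]]]]. exact H. Qed.

Lemma Hc j : 0 < cj j /\ cj j * cj j * Tj j = (/ 2) ^ j.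
Proof.
  pose proof (HT j). assert (0 < (/2) ^ j) by (apply pow_lt; lra).
  assert (0 < (/ 2) ^ j / Tj j) by (apply Rdiv_lt_0_compat; auto).
  unfold cj. split. apply sqrt_lt_R0; auto.
  rewrite sqrt_sqrt by lra. field. lra.
Qed.

Lemma Hy j : 0 < yj j.
Proof. unfold yj, yy. apply exp_pos. Qed.

Definition ej j k := if andb (Nat.leb (nb j) k) (Nat.leb k (ub j)) then cj j * (yj j ^ k * / beta k) else 0.
Definition al k := sum_n (fun j => ej j k) k.

Lemma ej_nn j k : 0 <= ej j k.
Proof.
  unfold ej. destruct (andb _ _); [|lra].
  pose proof (Hc j). pose proof (Hy j). pose proof (Hpos k).
  apply Rmult_le_pos; [lra|]. apply Rmult_le_pos. apply pow_le; lra. left; apply Rinv_0_lt_compat; auto.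
Qed.

Lemma ej_in j k : (nb j <= k <= ub j)%nat -> ej j k = cj j * (yj j ^ k * / beta k).
Proof. intros H. unfold ej. destruct (Nat.leb_spec (nb j) k); destruct (Nat.leb_spec k (ub j)); simpl; auto; lia. Qed.

Lemma ej_out j k : ~ (nb j <= k <= ub j)%nat -> ej j k = 0.
Proof. intros H. unfold ej. destruct (Nat.leb_spec (nb j) k); destruct (Nat.leb_spec k (ub j)); simpl; auto; lia. Qed.

Lemma al_in j k : (nb j <= k <= ub j)%nat -> al k = cj j * (yj j ^ k * / beta k).
Proof.
  intros H. unfold al. rewrite (sum_n_single _ j k).
  - apply ej_in; auto.
  - pose proof (Hjn j). lia.
  - intros i Hi Hne. apply ej_out. intros Hi'. apply Hne. eapply Hdisj; eauto.
Qed.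

Lemma al_nn k : 0 <= al k.
Proof. unfold al, sum_n. apply sum_n_m_nonneg. intros; apply ej_nn. Qed.

Lemma al_sq k : al k ^ 2 * beta k = sum_n (fun j => ej j k ^ 2 * beta k) k.
Proof.
  destruct (classic (exists j, (nb j <= k <= ub j)%nat)) as [[j Hj]|Hno].
  - rewrite (al_in j k Hj). rewrite (sum_n_single _ j k).
    + rewrite ej_in; auto.
    + pose proof (Hjn j). lia.
    + intros i Hi Hne. rewrite ej_out. simpl; ring. intros Hi'. apply Hne. eapply Hdisj; eauto.
  - assert (Hz : forall j, ej j k = 0) by (intros j; apply ej_out; intros H; apply Hno; exists j; auto).
    unfold al. rewrite sum_n_zero by (intros; apply Hz). rewrite sum_n_zero. simpl; ring.
    intros i _. rewrite Hz. simpl; ring.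
Qed.

Lemma sum_ext_N k N : (k <= N)%nat ->
  sum_n (fun j => ej j k ^ 2 * beta k) k = sum_n (fun j => ej j k ^ 2 * beta k) N.
Proof.
  intros HkN. unfold sum_n. rewrite (sum_n_m_Chasles _ 0 k N) by lia.
  rewrite (sum_n_m_zero_loc _ (S k) N). unfold plus; simpl. symmetry. apply Rplus_0_r.
  intros j Hj. rewrite ej_out. simpl; ring. pose proof (Hjn j). lia.
Qed.

Lemma inner_bound j N : sum_n (fun k => ej j k ^ 2 * beta k) N <= (/ 2) ^ j.
Proof.
  set (g := fun k => cj j * cj j * ((yj j ^ 2) ^ k * / beta k)).
  rewrite (sum_n_ext _ (fun k => if andb (Nat.leb (nb j) k) (Nat.leb k (ub j)) then g k else 0)).
  - eapply Rle_trans. apply sum_n_ind_le.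
    + intros k. unfold g. pose proof (Hc j). pose proof (Hy j). pose proof (Hpos k).
      apply Rmult_le_pos. nra. apply Rmult_le_pos. apply pow_le; apply pow_le; lra. left; apply Rinv_0_lt_compat; auto.
    + unfold g. rewrite (sum_n_m_mult_l (K:=R_Ring)). destruct (Hc j) as [_ E].
      right. rewrite <- E. unfold Tj, TT. reflexivity.
  - intros k. unfold ej. destruct (andb _ _); [|simpl; ring].
    unfold g. pose proof (Hpos k). rewrite <- pow_mult, Nat.mul_comm, pow_mult. change (@eq R ((cj j * (yj j ^ k * / beta k)) ^ 2 * beta k) (cj j * cj j * ((yj j ^ k) ^ 2 * / beta k))). field. lra.
Qed.

Lemma a_H2 : in_H2 beta (fun k => RtoC (al k)).
Proof.
  unfold in_H2. apply (ex_series_bounded _ 2).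
  - intros k. apply Rmult_le_pos. apply pow2_ge_0. left; auto.
  - intros N.
    rewrite (sum_n_ext_loc _ (fun k => sum_n (fun j => ej j k ^ 2 * beta k) N)).
    2:{ intros k Hk. rewrite Cmod_R, pow2_abs, al_sq. apply sum_ext_N; auto. }
    rewrite (sum_n_switch (fun k j => ej j k ^ 2 * beta k)).
    eapply Rle_trans; [|apply (geom_half N)].
    assert (0 <= (/2) ^ N) by (apply pow_le; lra).
    assert (sum_n (fun j => sum_n (fun k => ej j k ^ 2 * beta k) N) N <= sum_n (fun j => (/ 2) ^ j) N).
    { unfold sum_n at 1 3. apply sum_n_m_le. intros j. apply inner_bound. }
    lra.
Qed.



Lemma key j (b : nat -> C) : in_H2 beta b ->
  (forall z : C, Cmod z < 1 -> exists v : C, pseries_at (fun k => RtoC (al k)) (I1 z) v /\ pseries_at b z v) ->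
  (/ 2) ^ j <= Series (fun k => Cmod (b k) ^ 2 * beta k) * (/ 4) ^ j.
Proof.
  intros Hb Hz.
  set (B := Series (fun k => Cmod (b k) ^ 2 * beta k)).
  destruct (Hspec j) as [Hn1 [HnU [Ht [HT0 HS]]]].
  set (n := nb j) in *. set (U := ub j) in *. set (t := tt j n) in *.
  set (r := (1 - t) / (1 + t)) in *.
  assert (Hr : 0 < r < 1).
  { unfold r. split. apply Rdiv_lt_0_compat; lra. apply Rmult_lt_reg_r with (1 + t). lra.
    unfold Rdiv. rewrite Rmult_assoc, Rinv_l by lra. lra. }
  set (z := RtoC (- r)).
  assert (Hzl : Cmod z < 1) by (unfold z; rewrite Cmod_R, Rabs_Ropp, Rabs_pos_eq; lra).
  destruct (Hz z Hzl) as [v [Hav Hbv]]. unfold pseries_at in Hav, Hbv.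
  unfold z in Hav. unfold r in Hav. rewrite (I1_real t) in Hav by lra.
  set (y := exp (- t)) in *.
  assert (Hyy : yj j = y) by reflexivity.
  destruct (Hc j) as [Hc0 Hcc].
  set (c := cj j) in *.
  set (T := Tj j) in *.
  assert (Hlow : c * T <= Cmod v).
  { apply (BR2 _ v _ U Hav). intros N HN.
    rewrite (sum_n_ext _ (fun k => al k * y ^ k)).
    2:{ intros k. rewrite Cpow_real. simpl. ring. }
    apply Rle_trans with (sum_n_m (fun k => al k * y ^ k) n U).
    2:{ apply sum_n_m_sub; auto. intros k. apply Rmult_le_pos. apply al_nn. apply pow_le. unfold y; left; apply exp_pos. }
    unfold T, Tj, TT. fold n U. rewrite <- (sum_n_m_mult_l (K:=R_Ring)).
    apply sum_n_m_le_loc. intros k Hk. rewrite (al_in j k) by (unfold n, U in Hk; auto).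
    fold c. rewrite Hyy. change (mult c ((yy j n ^ 2) ^ k * / beta k)) with (c * ((y ^ 2) ^ k * / beta k)).
    rewrite <- pow_mult, Nat.mul_comm, pow_mult. right. simpl. ring. }
  assert (HexX : ex_series (fun k => Cmod (b k) ^ 2 * beta k)) by exact Hb.
  assert (HexY : ex_series (fun k => (r ^ 2) ^ k * / beta k)).
  { apply liminf_series; auto. split. apply pow_le; lra. simpl; nra. }
  set (S := Series (fun k => (r ^ 2) ^ k * / beta k)).
  assert (Hup : forall la, 0 < la -> Cmod v <= (B * / la + S * la) * / 2).
  { intros la Hla.
    set (h := fun k => (Cmod (b k) ^ 2 * beta k * / la + (r ^ 2) ^ k * / beta k * la) * / 2).
    assert (Hh : is_series h ((B * / la + S * la) * / 2)).
    { unfold h. apply is_series_scal_r. apply (is_series_plus (K:=R_AbsRing) (V:=R_NormedModule)).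
      apply is_series_scal_r. apply Series_correct; auto.
      apply is_series_scal_r. apply Series_correct; auto. }
    assert (Hhn : forall k, 0 <= h k).
    { intros k. unfold h. pose proof (Hpos k). apply Rmult_le_pos; [|lra]. apply Rplus_le_le_0_compat.
      apply Rmult_le_pos; [|left; apply Rinv_0_lt_compat; auto]. apply Rmult_le_pos. apply pow2_ge_0. lra.
      apply Rmult_le_pos; [|lra]. apply Rmult_le_pos. apply pow_le; apply pow_le; lra. left; apply Rinv_0_lt_compat; auto. }
    apply (BR1 _ v _ Hbv). intros N.
    rewrite <- (is_series_unique h _ Hh).
    eapply Rle_trans; [|apply partial_le_Series; auto; exists ((B * / la + S * la) * / 2); exact Hh].
    unfold sum_n. apply sum_n_m_le. intros k.
    unfold z. rewrite Cmod_mult, Cpow_real, Cmod_R, <- RPow_abs, Rabs_Ropp, Rabs_pos_eq by lra.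
    unfold h. pose proof (Hpos k).
    replace ((r ^ 2) ^ k) with ((r ^ k) ^ 2) by (rewrite <- !pow_mult; f_equal; lia).
    pose proof (amgm (Cmod (b k)) (r ^ k) (beta k) la H Hla). lra. }
  set (d := (/ 4) ^ j).
  assert (Hd0 : 0 < d) by (apply pow_lt; lra).
  assert (HSd : S <= d * T) by exact HS.
  specialize (Hup (c / d) ltac:(apply Rdiv_lt_0_compat; auto)).
  assert (Hm : S * (c / d) <= c * T).
  { apply Rle_trans with (d * T * (c / d)). apply Rmult_le_compat_r; [|auto]. left; apply Rdiv_lt_0_compat; auto.
    right. field. lra. }
  assert (HB : c * T <= B * d / c).
  { replace (B * d / c) with (B * / (c / d)) by (field; lra). lra. }
  rewrite <- Hcc.
  apply Rmult_le_compat_l with (r := c) in HB; [|lra].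
  replace (c * (B * d / c)) with (B * d) in HB by (field; lra).
  fold d. nra.
Qed.


Lemma contra : False.
Proof.
  destruct (HCI _ a_H2) as [b [Hb Hz]].
  set (B := Series (fun k => Cmod (b k) ^ 2 * beta k)).
  assert (Hk : forall j, 1 <= B * (/ 2) ^ j).
  { intros j. pose proof (key j b Hb Hz) as H. fold B in H.
    assert (E : (/ 4) ^ j = (/ 2) ^ j * (/ 2) ^ j).
    { rewrite <- Rpow_mult_distr. f_equal. field. }
    rewrite E in H. assert (0 < (/2) ^ j) by (apply pow_lt; lra).
    apply Rmult_le_reg_r with ((/ 2) ^ j); auto. nra. }
  assert (Hab : 0 < / (Rabs B + 1)) by (apply Rinv_0_lt_compat; pose proof (Rabs_pos B); lra).
  destruct (pow_lt_1_zero (/ 2) ltac:(rewrite Rabs_pos_eq; lra) _ Hab) as [N HN].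
  specialize (HN N (le_n N)). specialize (Hk N).
  assert (0 < (/2) ^ N) by (apply pow_lt; lra).
  rewrite Rabs_pos_eq in HN by lra.
  assert (B * (/ 2) ^ N <= Rabs B * (/ 2) ^ N) by (apply Rmult_le_compat_r; [lra| apply Rle_abs]).
  assert (Rabs B * (/ 2) ^ N <= Rabs B * / (Rabs B + 1)) by (apply Rmult_le_compat_l; [apply Rabs_pos| lra]).
  assert (Rabs B * / (Rabs B + 1) < 1).
  { pose proof (Rabs_pos B). apply Rmult_lt_reg_r with (Rabs B + 1). lra.
    rewrite Rmult_assoc, Rinv_l by lra. lra. }
  lra.
Qed.

End Main.



Theorem mainTheorem20 (beta : nat -> R) :
  (forall n : nat, 0 < beta n) ->
  (forall n : nat, beta (S n) <= beta n) ->
  Rbar_le (Finite 1) (LimInf_seq (fun n => Rpower (beta n) (/ INR n))) ->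
  CI1_maps_into beta ->
  Delta2 beta.
Proof.
  intros Hpos Hd Hli HCI.
  destruct (classic (Delta2 beta)) as [H|HnD]; auto. exfalso.
  pose proof (block_exists beta Hpos Hd Hli HnD) as HB.
  set (G := fun j M => proj1_sig (constructive_indefinite_description _ (HB j M))).
  assert (HG : forall j M, (M <= fst (G j M))%nat /\ BlockSpec beta j (fst (G j M)) (snd (G j M))).
  { intros j M. unfold G. destruct (constructive_indefinite_description _ (HB j M)) as [x Hx]. exact Hx. }
  eapply contra; eauto.
Qed.
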